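(* Let $n$ be an even perfect square. Then $D_{S(n)^*}=C_{S(n)^*}=4$.
   Context: For a natural number $n$, $\mathbb Z_n=\mathbb Z/n\mathbb Z$, $S(n)=\{x^2:x\in\mathbb Z_n\}$, $S(n)^*=S(n)\setminus\{0\}$. For $A\subseteq\mathbb Z_n$, a sequence $(y_1,\dots,y_t)$ ($t\ge1$) in $\mathbb Z_n$ is an $A$-weighted zero-sum sequence if there exist $a_1,\dots,a_t\in A$ with $\sum a_iy_i=0$; a sequence has an $A$-weighted zero-sum subsequence if some nonempty subsequence is an $A$-weighted zero-sum sequence. $D_A(n)$ is the least positive integer $t$ such that every sequence of length $t$ in $\mathbb Z_n$ has an $A$-weighted zero-sum subsequence; $C_A(n)$ is the least positive integer $t$ such that every sequence of length $t$ in $\mathbb Z_n$ has an $A$-weighted zero-sum subsequence consisting of consecutive terms. $D_{S(n)^*}=D_{S(n)^*}(n)$, $C_{S(n)^*}=C_{S(n)^*}(n)$. *)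

(* Defs.v *)
(* Z_n is modelled as residues 'I_n with arithmetic mod n. *)
From mathcomp Require Import all_boot.
Set Implicit Arguments. Unset Strict Implicit. Unset Printing Implicit Defensive.

Definition Ssq (n : nat) : pred nat :=
  fun a => (a < n) && [exists x : 'I_n, (x * x) %% n == a].

Definition Ssq_star (n : nat) : pred nat := fun a => Ssq n a && (a != 0).

Definition weighted_zero_sum (n : nat) (A : pred nat) (t : nat)
    (y : 'I_t -> 'I_n) (I : {set 'I_t}) : Prop :=
  exists a : 'I_t -> nat,
    (forall i, i \in I -> A (a i)) /\
    (\sum_(i in I) a i * y i) %% n = 0.

Definition D_prop (n : nat) (A : pred nat) (t : nat) : Prop :=
  forall y : 'I_t -> 'I_n,
    exists I : {set 'I_t}, I != set0 /\ weighted_zero_sum A y I.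

Definition C_prop (n : nat) (A : pred nat) (t : nat) : Prop :=
  forall y : 'I_t -> 'I_n,
    exists l r : nat, l < r <= t /\
      weighted_zero_sum A y [set i : 'I_t | l <= i < r].

Definition is_least_pos (P : nat -> Prop) (m : nat) : Prop :=
  0 < m /\ P m /\ (forall t, 0 < t -> t < m -> ~ P t).

Definition D_eq (n : nat) (A : pred nat) (m : nat) := is_least_pos (D_prop n A) m.
Definition C_eq (n : nat) (A : pred nat) (m : nat) := is_least_pos (C_prop n A) m.

(* Main.v *)
Require Import Defs.
From mathcomp Require Import all_boot zify.
Set Implicit Arguments. Unset Strict Implicit. Unset Printing Implicit Defensive.

Lemma sq_mod4 x : x ^ 2 %% 4 = odd x.
Proof.
rewrite -{1}(odd_double_half x).
set h := x./2; case: (odd x) => /=.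
- have -> : (1 + h.*2) ^ 2 = (h + h * h) * 4 + 1 by rewrite -!muln2; nia.
  by rewrite modnMDl.
- have -> : (0 + h.*2) ^ 2 = (h * h) * 4 by rewrite -!muln2; nia.
  by rewrite modnMl.
Qed.

Lemma even_half x : ~~ odd x -> x = 2 * x./2.
Proof. move=> h; rewrite -{1}(odd_double_half x) (negbTE h) add0n -muln2 mulnC //. Qed.

Lemma loc2 e : forall x0 x1 x2 y0 y1 y2, y0 %% 4 = 1 -> y1 %% 4 = 1 -> y2 %% 4 = 1 ->
  4 ^ e %| x0 ^ 2 * y0 + x1 ^ 2 * y1 + x2 ^ 2 * y2 ->
  [/\ 2 ^ e %| x0, 2 ^ e %| x1 & 2 ^ e %| x2].
Proof.
elim: e => [|e IH] x0 x1 x2 y0 y1 y2 h0 h1 h2 hd; first by rewrite !expn0 !dvd1n.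
have h4 : 4 %| x0 ^ 2 * y0 + x1 ^ 2 * y1 + x2 ^ 2 * y2.
  by apply: dvdn_trans hd; rewrite expnS dvdn_mulr.
have ey : forall x y, y %% 4 = 1 -> x ^ 2 * y = odd x + 4 * (x./2 * x./2 + odd x * x./2 + x ^ 2 * (y %/ 4)).
  move=> x y hy; rewrite {1}(divn_eq y 4) hy.
  have hx := odd_double_half x; rewrite -muln2 in hx.
  move: hx; set h := x./2; case: (odd x) => /= hx; rewrite -hx; nia.
have : 4 %| odd x0 + odd x1 + odd x2.
  move: h4; rewrite (ey _ _ h0) (ey _ _ h1) (ey _ _ h2).
  set A := _ + 4 * _; set B := _ + 4 * _; set C := odd x2 + _.
  have -> : A + B + C = odd x0 + odd x1 + odd x2 + 4 * ((x0./2 * x0./2 + odd x0 * x0./2 + x0 ^ 2 * (y0 %/ 4)) + (x1./2 * x1./2 + odd x1 * x1./2 + x1 ^ 2 * (y1 %/ 4)) + (x2./2 * x2./2 + odd x2 * x2./2 + x2 ^ 2 * (y2 %/ 4))) by rewrite /A /B /C; nia.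
  by rewrite dvdn_addl // dvdn_mulr.
case o0: (odd x0); case o1: (odd x1); case o2: (odd x2) => //= _.
rewrite (even_half (negbT o0)) (even_half (negbT o1)) (even_half (negbT o2)) in hd *.
move: hd; set z0 := x0./2; set z1 := x1./2; set z2 := x2./2.
have -> : (2 * z0) ^ 2 * y0 + (2 * z1) ^ 2 * y1 + (2 * z2) ^ 2 * y2 =
   4 * (z0 ^ 2 * y0 + z1 ^ 2 * y1 + z2 ^ 2 * y2) by nia.
rewrite expnS dvdn_pmul2l // => /(IH _ _ _ _ _ _ h0 h1 h2) [d0 d1 d2].
by rewrite !expnS !dvdn_pmul2l.
Qed.

Definition Np (p u : nat) := forall x z, p %| x ^ 2 + u * z ^ 2 -> p %| z.

Lemma locp p f : prime p -> forall x0 x1 x2 u w, Np p u -> p %| w -> ~~ (p ^ 2 %| w) ->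
  p ^ (2 * f) %| x0 ^ 2 + x1 ^ 2 * u + x2 ^ 2 * w ->
  [/\ p ^ f %| x0, p ^ f %| x1 & p ^ f %| x2].
Proof.
move=> pr; have p0 : 0 < p by apply: prime_gt0.
elim: f => [|f IH] x0 x1 x2 u w hu hw hw2 hd; first by rewrite !expn0 !dvd1n.
have [w' ew] : exists w', w = p * w' by move/dvdnP: hw => [q ->]; exists q; rewrite mulnC.
have nw' : ~~ (p %| w').
  by apply: contra hw2; rewrite ew expnS expn1 dvdn_pmul2l.
have hp : p %| x0 ^ 2 + x1 ^ 2 * u + x2 ^ 2 * w.
  by apply: dvdn_trans hd; rewrite mulnS expnS dvdn_mulr.
have d1 : p %| x1.
  have : p %| x0 ^ 2 + u * x1 ^ 2.
    move: hp; rewrite ew.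
    have -> : x0 ^ 2 + x1 ^ 2 * u + x2 ^ 2 * (p * w') = (x0 ^ 2 + u * x1 ^ 2) + p * (x2 ^ 2 * w') by nia.
    by rewrite dvdn_addl // dvdn_mulr.
  by move/hu.
have d0 : p %| x0.
  have : p %| x0 ^ 2.
    move: hp; rewrite ew; move/dvdnP: d1 => [q ->].
    have -> : x0 ^ 2 + (q * p) ^ 2 * u + x2 ^ 2 * (p * w') = x0 ^ 2 + p * (q * q * p * u + x2 ^ 2 * w') by nia.
    by rewrite dvdn_addl // dvdn_mulr.
  by rewrite Euclid_dvdX // andbT.
move/dvdnP: d0 => [z0 e0]; move/dvdnP: d1 => [z1 e1].
have d2 : p %| x2.
  have : p ^ 2 %| x2 ^ 2 * w.
    move: hd; rewrite e0 e1.
    have -> : (z0 * p) ^ 2 + (z1 * p) ^ 2 * u + x2 ^ 2 * w = p ^ 2 * (z0 ^ 2 + z1 ^ 2 * u) + x2 ^ 2 * w by nia.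
    move=> h; have h2 : p ^ 2 %| p ^ 2 * (z0 ^ 2 + z1 ^ 2 * u) + x2 ^ 2 * w.
      by apply: dvdn_trans h; rewrite dvdn_exp2l // mulnS.
    rewrite dvdn_addr in h2. exact: h2. exact: dvdn_mulr.
  rewrite ew (mulnC p) mulnA expnS expn1 dvdn_pmul2r // Euclid_dvdM // (negbTE nw') orbF.
  by rewrite Euclid_dvdX // andbT.
move/dvdnP: d2 => [z2 e2].
move: hd; rewrite e0 e1 e2.
have -> : (z0 * p) ^ 2 + (z1 * p) ^ 2 * u + (z2 * p) ^ 2 * w = p ^ 2 * (z0 ^ 2 + z1 ^ 2 * u + z2 ^ 2 * w) by nia.
rewrite mulnS expnD dvdn_pmul2l ?expn_gt0 ?p0 //.
move=> /(IH _ _ _ _ _ hu hw hw2) [h0 h1 h2].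
by rewrite !expnS !(mulnC _ p) !dvdn_pmul2l.
Qed.

Lemma nonres p : prime p -> p != 2 -> exists2 v, v < p & forall t, t ^ 2 %% p != v.
Proof.
move=> pr p2; have p0 : 0 < p by apply: prime_gt0.
have p1 : 1 < p by apply: prime_gt1.
pose f := fun t : 'I_p => Ordinal (ltn_pmod (t ^ 2) p0).
case: (boolP [exists v : 'I_p, [forall t : 'I_p, f t != v]]).
  move/existsP=> [v /forallP hv]; exists v => // t.
  have := hv (Ordinal (ltn_pmod t p0)); apply: contra => /eqP e.
  by apply/eqP/val_inj => /=; rewrite -modnXm modn_mod modnXm e.
rewrite negb_exists => /forallP hall.
have hinj : {in 'I_p &, injective f}.
  apply/image_injP; rewrite eqn_leq leq_image_card /=.
  apply: subset_leq_card; apply/subsetP => v _.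
  move: (hall v); rewrite negb_forall => /existsP [t]; rewrite negbK => /eqP <-.
  by apply: image_f.
have pm1 : p.-1 < p by rewrite prednK // ?prime_gt0.
have e : f (Ordinal p1) = f (Ordinal pm1).
  apply: val_inj => /=; rewrite modn_small //.
  have -> : p.-1 ^ 2 = (p - 2) * p + 1 by nia.
  by rewrite modnMDl modn_small.
have := hinj (Ordinal p1) (Ordinal pm1) isT isT e; move/(congr1 val) => /= h.
by move: p2; rewrite -(prednK p0) -h.
Qed.

Lemma exists_Np p : prime p -> p != 2 -> exists u, Np p u.
Proof.
move=> pr p2; have [v vp hv] := nonres pr p2.
have p0 : 0 < p by apply: prime_gt0.
exists (p - v) => x z hd; apply/contraT => nz.
have cp : coprime p z by rewrite prime_coprime.
have [a _ ha] := Bezoutl z p0; rewrite (eqP cp) in ha.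
set s := a * z in ha.
have s1 : 1 <= s.
  case: s ha => // ; rewrite dvdn1 => /eqP h; by rewrite h in pr.
have h1 : p %| (a * x) ^ 2 + (p - v) * s ^ 2.
  have -> : (a * x) ^ 2 + (p - v) * s ^ 2 = a ^ 2 * (x ^ 2 + (p - v) * z ^ 2) by rewrite /s; nia.
  by rewrite dvdn_mull.
have h2 : p %| (a * x) ^ 2 + (p - v).
  have es : s ^ 2 = (s - 1) * (1 + s) + 1.
    by case: (s) s1 => // t _; rewrite subSS subn0; nia.
  rewrite es mulnDr muln1 addnA addnAC dvdn_addl in h1 => //.
  by apply: dvdn_mull; apply: dvdn_mull.
have H : (a * x) ^ 2 %% p == v; last by move: (hv (a * x)); rewrite H.
have : (a * x) ^ 2 + p == v %[mod p].
  by rewrite eqn_mod_dvd ?(leq_trans (ltnW vp) (leq_addl _ _)) // -addnBA // ltnW.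
by rewrite modnDr (modn_small vp).
Qed.

Lemma Np_mod p u u' : u = u' %[mod p] -> Np p u' -> Np p u.
Proof.
move=> e h x z hd; apply: (h x); move: hd; rewrite /dvdn.
have -> : (x ^ 2 + u * z ^ 2) %% p = (x ^ 2 + u' * z ^ 2) %% p; last by [].
by rewrite -[LHS]modnDmr -[RHS]modnDmr -[u * _ %% p]modnMml -[u' * _ %% p]modnMml e.
Qed.

Lemma dvd_mod d m w w' : d %| m -> w = w' %[mod m] -> (d %| w) = (d %| w').
Proof. by move=> dm e; rewrite /dvdn -(modn_dvdm w dm) e (modn_dvdm w' dm). Qed.

Lemma crt ps : uniq ps -> all prime ps -> exists u w, [/\ u %% 4 = 1, w %% 4 = 1 &
  forall p, p \in ps -> p != 2 -> [/\ Np p u, p %| w & ~~ (p ^ 2 %| w)]].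
Proof.
elim: ps => [|p ps IH] /=.
  by move=> _ _; exists 1, 1; split => // p.
move=> /andP [pn un] /andP [pr apr].
have [u' [w' [hu' hw' H']]] := IH un apr.
case: (eqVneq p 2) => [p2|p2].
  exists u', w'; split => // q; rewrite inE => /orP [/eqP -> |qi]; first by rewrite p2.
  by apply: H'.
have [up hup] := exists_Np pr p2.
pose M := 4 * \prod_(q <- ps) q ^ 2.
have cop : coprime (p ^ 2) M.
  rewrite coprime_pexpl // prime_coprime // Euclid_dvdM // negb_or; apply/andP; split.
    apply/negP => h4; have : p %| 2 by move: h4; rewrite (_ : 4 = 2 ^ 2) // Euclid_dvdX // andbT.
    by rewrite dvdn_prime2 // (negbTE p2).
  rewrite Euclid_dvd_prod // big_has; apply/negP => /hasP [q qi]; rewrite Euclid_dvdX // andbT.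
  move: apr => /allP /(_ q qi) qp; rewrite dvdn_prime2 // => /eqP pq.
  by move: pn; rewrite pq qi.
have Mdiv : forall q, q \in ps -> q ^ 2 %| M.
  move=> q qi; rewrite /M (big_rem q qi) /= mulnCA; exact: dvdn_mulr.
have d4 : 4 %| M by rewrite dvdn_mulr.
pose u := chinese (p ^ 2) M up u'.
pose w := chinese (p ^ 2) M p w'.
have eu1 : u = up %[mod p ^ 2] by apply: chinese_modl.
have eu2 : u = u' %[mod M] by apply: chinese_modr.
have ew1 : w = p %[mod p ^ 2] by apply: chinese_modl.
have ew2 : w = w' %[mod M] by apply: chinese_modr.
have pp2 : p %| p ^ 2 by rewrite dvdn_exp.
have p1 : 1 < p by apply: prime_gt1.
exists u, w; split.
- by rewrite -(modn_dvdm u d4) eu2 (modn_dvdm u' d4).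
- by rewrite -(modn_dvdm w d4) ew2 (modn_dvdm w' d4).
move=> q; rewrite inE => /orP [/eqP -> _ | qi q2].
  split.
  - apply: (Np_mod (u' := up)) => //.
    by rewrite -(modn_dvdm u pp2) eu1 (modn_dvdm up pp2).
  - by rewrite (dvd_mod pp2 ew1) dvdnn.
  - rewrite (dvd_mod (dvdnn _) ew1) /dvdn modn_small //.
      by rewrite -(prednK (prime_gt0 pr)); case: (p) p1.
    by rewrite -{1}(expn1 p) ltn_exp2l.
have [h1 h2 h3] := H' q qi q2.
have qM : q %| M by apply: dvdn_trans (Mdiv q qi); rewrite dvdn_exp.
split.
- by apply: (Np_mod (u' := u')) => //; rewrite -(modn_dvdm u qM) eu2 (modn_dvdm u' qM).
- by rewrite (dvd_mod qM ew2).
- by rewrite (dvd_mod (Mdiv q qi) ew2).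
Qed.

Lemma glob k x0 x1 x2 u w : 0 < k -> u %% 4 = 1 -> w %% 4 = 1 ->
 (forall p, p \in primes k -> p != 2 -> [/\ Np p u, p %| w & ~~ (p ^ 2 %| w)]) ->
 k ^ 2 %| x0 ^ 2 + x1 ^ 2 * u + x2 ^ 2 * w -> [/\ k %| x0, k %| x1 & k %| x2].
Proof.
move=> k0 hu hw H hd.
have loc : forall p, p \in primes k -> [/\ k`_p %| x0, k`_p %| x1 & k`_p %| x2].
  move=> p pi; rewrite p_part.
  have pr : prime p by move: pi; rewrite mem_primes => /and3P [].
  have hd' : (p ^ logn p k) ^ 2 %| x0 ^ 2 + x1 ^ 2 * u + x2 ^ 2 * w.
    by apply: dvdn_trans hd; apply: dvdn_exp2r; rewrite -p_part dvdn_part.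
  case: (eqVneq p 2) => [p2|p2].
    subst p; apply: (@loc2 _ _ _ _ 1 u w) => //.
    by rewrite muln1 (_ : 4 = 2 * 2) // expnMn mulnn.
  have [h1 h2 h3] := H p pi p2.
  by apply: (locp pr h1 h2 h3); rewrite mulnC expnM.
have fin : forall x, (forall p, p \in primes k -> k`_p %| x) -> k %| x.
  by move=> x hx; apply/dvdn_partP => // p pi; apply: hx.
split; apply: fin => p pi; by case: (loc p pi).
Qed.

Lemma key (c : nat -> nat) : exists l r, l < r <= 4 /\ 4 %| \sum_(l <= i < r) c i.
Proof.
pose S j := \sum_(0 <= i < j) c i.
pose g := fun j : 'I_5 => Ordinal (ltn_pmod (S j) (isT : 0 < 4)).
have gen : forall a b : 'I_5, a < b -> g a = g b -> exists l r, l < r <= 4 /\ 4 %| \sum_(l <= i < r) c i.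
  move=> a b ab /(congr1 val) /= e; exists a, b; split.
    by rewrite ab /= -ltnS ltn_ord.
  have := eqn_mod_dvd 4 (leq_addr (\sum_(a <= i < b) c i) (S a)).
  rewrite addKn => <-.
  rewrite /S -big_cat_nat ?leq0n ?(ltnW ab) //.
  by apply/eqP; rewrite e.
case: (boolP [exists j1 : 'I_5, exists j2 : 'I_5, (j1 != j2) && (g j1 == g j2)]).
  move/existsP=> [j1 /existsP [j2 /andP [ne /eqP e]]].
  case: (ltngtP j1 j2) => h.
  - exact: gen h e.
  - exact: gen h (esym e).
  - by move: ne; rewrite (val_inj h) eqxx.
rewrite negb_exists => /forallP hall.
have inj : injective g.
  move=> j1 j2 e; move: (hall j1); rewrite negb_exists => /forallP /(_ j2).
  rewrite e eqxx andbT negbK => /eqP //.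
by have := leq_card g inj; rewrite !card_ord.
Qed.

Lemma CD n (A : pred nat) t : C_prop n A t -> D_prop n A t.
Proof.
move=> hC y; have [l [r [/andP [lr rt] hw]]] := hC y.
exists [set i : 'I_t | l <= i < r]; split => //.
apply/set0Pn; have lt : l < t by apply: leq_trans lr rt.
by exists (Ordinal lt); rewrite inE /= leqnn lr.
Qed.

Lemma Dmono n (A : pred nat) t : D_prop n A t -> D_prop n A t.+1.
Proof.
move=> hD y; have [I' [ne [a' [ha hs]]]] := hD (fun i => y (lift ord_max i)).
exists [set lift ord_max i | i in I']; split.
  by move/set0Pn: ne => [i hi]; apply/set0Pn; exists (lift ord_max i); apply: imset_f.
exists (fun i => oapp a' 0 (unlift ord_max i)); split.
  by move=> i /imsetP [j hj ->]; rewrite liftK /=; apply: ha.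
rewrite big_imset /=; last by move=> i j _ _; apply: lift_inj.
by rewrite -[RHS]hs; congr (_ %% _); apply: eq_bigr => i _; rewrite liftK.
Qed.

Lemma upper n m : 0 < m -> n = (2 * m) ^ 2 -> C_prop n (Ssq_star n) 4.
Proof.
move=> m0 en y.
have [l [r [hlr hd]]] := key (fun i => y (inord i)).
exists l, r; split => //.
have mn : m < n by rewrite en; nia.
exists (fun _ => m ^ 2); split.
  move=> i _; rewrite /Ssq_star /Ssq; apply/andP; split; last by rewrite expn_eq0 negb_and -lt0n m0.
  apply/andP; split; first by rewrite en; nia.
  by apply/existsP; exists (Ordinal mn); rewrite /= modn_small mulnn // en; nia.
apply/eqP; rewrite -/(dvdn _ _) -big_distrr /=.
have -> : \sum_(i in [set i : 'I_4 | l <= i < r]) (y i : nat) = \sum_(l <= i < r) y (inord i).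
  rewrite (big_nat_widen _ _ _ _ _ (proj2 (andP hlr))) big_geq_mkord.
  apply: eq_big => [i|i _]; first by rewrite inE andbC.
  by rewrite inord_val.
apply: (@dvdn_trans (m ^ 2 * 4)); first by rewrite en expnMn mulnC.
exact: dvdn_mul.
Qed.

Lemma lower n k : 0 < k -> ~~ odd k -> n = k ^ 2 -> ~ D_prop n (Ssq_star n) 3.
Proof.
move=> k0 ek en hD.
have n0 : 0 < n by rewrite en expn_gt0 k0.
have [u [w [hu hw H]]] := crt (primes_uniq k) (all_prime_primes k).
pose Y := [:: 1; u; w].
pose y := fun i : 'I_3 => Ordinal (ltn_pmod (nth 0 Y i) n0).
have [I [ne [a [ha hs]]]] := hD y.
pose X := fun i : 'I_3 => if [pick x : 'I_n | (x * x) %% n == a i] is Some x then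
                  (if i \in I then val x else 0) else 0.
have hX : forall i, i \in I -> X i ^ 2 %% n = a i.
  move=> i hi; rewrite /X; case: pickP => [x /eqP hx|].
    by rewrite hi -hx mulnn.
  move: (ha i hi) => /andP [/andP [_ /existsP [x hx]] _] /(_ x).
  by rewrite hx.
have hX0 : forall i, i \notin I -> X i = 0.
  by move=> i /negbTE hi; rewrite /X; case: pickP => // x _; rewrite hi.
have hsum : (\sum_(i < 3) X i ^ 2 * y i) %% n = 0.
  rewrite -[RHS]hs /= -[LHS]modn_summ -[RHS]modn_summ; congr (_ %% _).
  rewrite [RHS]big_mkcond /=; apply: eq_bigr => i _; case: (boolP (i \in I)) => hi.
    by rewrite -modnMml hX // modnMml.
  by rewrite (hX0 _ hi) exp0n // mul0n mod0n.
move: hsum; rewrite !big_ord_recl big_ord0 addn0 /=.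
have k2 : 2 %| k by rewrite dvdn2.
have d4 : 4 %| n by rewrite en (_ : 4 = 2 ^ 2) // dvdn_exp2r.
have n1 : 1 < n by rewrite en; move: k0 ek; case: (k) => [|[|k1]] //= _ _; nia.
rewrite (modn_small n1) muln1 => hsum.
set X0 := X ord0; set X1 := X (lift ord0 ord0); set X2 := X (lift ord0 (lift ord0 ord0)).
have hkn : k ^ 2 %| X0 ^ 2 + X1 ^ 2 * (u %% n) + X2 ^ 2 * (w %% n).
  by rewrite -en /dvdn -addnA hsum.
have hu' : (u %% n) %% 4 = 1 by rewrite (modn_dvdm u d4).
have hw' : (w %% n) %% 4 = 1 by rewrite (modn_dvdm w d4).
have H' : forall p, p \in primes k -> p != 2 -> [/\ Np p (u %% n), p %| w %% n & ~~ (p ^ 2 %| w %% n)].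
  move=> p pi p2; have [h1 h2 h3] := H p pi p2.
  have pk : p %| k by move: pi; rewrite mem_primes => /and3P [].
  have pn : p %| n by rewrite en; apply: dvdn_trans pk _; apply: dvdn_exp.
  have p2n : p ^ 2 %| n by rewrite en dvdn_exp2r.
  have em : w %% n = w %[mod n] by rewrite modn_mod.
  split.
  - by apply: (Np_mod (u' := u)) => //; rewrite (modn_dvdm u pn).
  - by rewrite (dvd_mod pn em).
  - by rewrite (dvd_mod p2n em).
have [d0 d1 d2] := glob k0 hu' hw' H' hkn.
move/set0Pn: ne => [i hi].
have hki : k %| X i.
  case: i hi => [[|[|[|//]]] Hi] hi.
  - by rewrite (_ : Ordinal Hi = ord0) //; apply: val_inj.
  - by rewrite (_ : Ordinal Hi = lift ord0 ord0) //; apply: val_inj.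
  - by rewrite (_ : Ordinal Hi = lift ord0 (lift ord0 ord0)) //; apply: val_inj.
have : a i = 0.
  rewrite -(hX i hi); apply/eqP; rewrite -/(dvdn _ _) en; exact: dvdn_exp2r.
by move: (ha i hi) => /andP [_ /eqP].
Qed.

Theorem mainTheorem9 (n : nat) :
  0 < n -> ~~ odd n -> (exists k : nat, n = k ^ 2) ->
  D_eq n (Ssq_star n) 4 /\ C_eq n (Ssq_star n) 4.
Proof.
move=> n0 en [k ek].
have k0 : 0 < k by move: n0; rewrite ek; case: (k).
have ok : ~~ odd k by move: en; rewrite ek oddX.
have em := even_half ok.
have m0 : 0 < k./2 by move: k0; rewrite {1}em muln_gt0.
have hC : C_prop n (Ssq_star n) 4 by apply: (upper m0); rewrite -em.
have nD : forall t, 0 < t -> t < 4 -> ~ D_prop n (Ssq_star n) t.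
  move=> t t0 t4 hD; apply: (lower k0 ok ek).
  move: t0 t4 hD; case: t => [|[|[|[|]]]] // _ _ h.
  - by do 2 apply: Dmono.
  - by apply: Dmono.
split; split => //; split.
- exact: CD.
- exact: nD.
- exact: hC.
- by move=> t t0 t4 h; apply: (nD t t0 t4); apply: CD.
Qed.
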